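(* Let $t\ge0$, let $b_0,\dots,b_t\ge0$ be integers, let $M=\{0^{(b_0)},1^{(b_1)},\dots,t^{(b_t)}\}$ be the multiset containing $b_i$ copies of $i$, and let $0\le k\le t$. Then the number of $k$-vn-arrangements of $M$ is \[\binom{b_0+b_1+\cdots+b_k}{b_0,b_1,\dots,b_k}\prod_{i=1}^{t-k}\binom{b_i+b_{i+1}+\cdots+b_{i+k}}{b_{i+k}}.\]
   Context: Let $b=b_0+\cdots+b_t$. A $k$-vn-arrangement of $M$ is a sequence $(v_1,\dots,v_b)$ listing the elements of $M$ with their multiplicities such that $v_{i+1}-v_i\le k$ for all $1\le i<b$. The first factor is a multinomial coefficient, and an empty product equals $1$. *)

(* Defs.v *)
From mathcomp Require Import all_boot.
Set Implicit Arguments. Unset Strict Implicit. Unset Printing Implicit Defensive.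

Definition vn_multiset (t : nat) (b : nat -> nat) : seq nat :=
  flatten [seq nseq (b i) i | i <- iota 0 t.+1].

(* A k-vn-arrangement condition on a listing (v_1,...,v_b): v_{i+1} - v_i <= k
   (difference taken in the integers; i.e. v_{i+1} <= v_i + k). *)
Definition vn_step (k : nat) (x y : nat) : bool := y <= x + k.

Definition is_vn_arrangement (k : nat) (s : seq nat) : bool :=
  sorted (vn_step k) s.

(* Number of k-vn-arrangements of M: distinct sequences listing M with multiplicities
   (seq.permutations is duplicate-free) satisfying the step condition. *)
Definition num_vn_arrangements (t : nat) (b : nat -> nat) (k : nat) : nat :=
  count (is_vn_arrangement k) (permutations (vn_multiset t b)).

Definition multinomial (ns : seq nat) : nat :=
  (sumn ns)`! %/ \prod_(n <- ns) n`!.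

(* Main.v *)
Require Import Defs.
From mathcomp Require Import all_boot zify.
Set Implicit Arguments. Unset Strict Implicit. Unset Printing Implicit Defensive.

Definition Hh (m k x : nat) : bool := m - k <= x.

Fixpoint mval (m k : nat) (hi : bool) (u : seq nat) : bool :=
  if u is y :: u' then ((y == m) ==> hi) && mval m k (Hh m k y) u' else true.

Fixpoint ins (m k : nat) (w : seq nat) : bool -> nat -> seq (seq nat) :=
  match w with
  | [::] => fun hi n => if hi || (n == 0) then [:: nseq n m] else [::]
  | a :: w' => fix insn (hi : bool) (n : nat) {struct n} : seq (seq nat) :=
      match n with
      | 0 => map (cons a) (ins m k w' (Hh m k a) 0)
      | n'.+1 => (if hi then map (cons m) (insn true n') else [::])
                   ++ map (cons a) (ins m k w' (Hh m k a) n'.+1)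
      end
  end.

Lemma ins_cons0 m k a w hi : ins m k (a :: w) hi 0 = map (cons a) (ins m k w (Hh m k a) 0).
Proof. by []. Qed.

Lemma ins_consS m k a w hi n : ins m k (a :: w) hi n.+1 =
  (if hi then map (cons m) (ins m k (a :: w) true n) else [::])
    ++ map (cons a) (ins m k w (Hh m k a) n.+1).
Proof. by []. Qed.

Lemma mem_map_cons (a y : nat) (u : seq nat) (L : seq (seq nat)) :
  (y :: u \in map (cons a) L) = (y == a) && (u \in L).
Proof.
apply/mapP/andP => [[v Hv [-> ->]] | [/eqP -> Hu]]; first by [].
by exists u.
Qed.

Lemma nil_map_cons (a : nat) (L : seq (seq nat)) : ([::] \in map (cons a) L) = false.
Proof. by apply/mapP => [[v _]]. Qed.

Lemma filter_nil_nseq m (u : seq nat) :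
  [seq x <- u | predC1 m x] = [::] -> u = nseq (count_mem m u) m.
Proof.
elim: u => //= y u IH; case: (eqVneq y m) => [-> | //] /= H.
by rewrite /= -IH.
Qed.

Lemma mval_nseq m k hi j : mval m k hi (nseq j m) = hi || (j == 0).
Proof.
elim: j hi => [|j IH] hi /=; first by rewrite orbT.
rewrite eqxx /= IH /Hh leq_subr /=; by case: hi.
Qed.

Lemma count_nseq_m (m j : nat) : count_mem m (nseq j m) = j.
Proof. by elim: j => //= j ->; rewrite eqxx. Qed.

Lemma filter_nseq_m (m j : nat) : [seq x <- nseq j m | predC1 m x] = [::].
Proof. by rewrite filter_nseq /= eqxx. Qed.

Lemma mem_ins m k w : all (predC1 m) w -> forall hi n u,
  (u \in ins m k w hi n) =
  [&& [seq x <- u | predC1 m x] == w, count_mem m u == n & mval m k hi u].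
Proof.
elim: w => [|a w IHw] Hall hi n u.
  rewrite /=. apply/idP/idP.
    case: ifP => Hhi; last by rewrite in_nil.
    rewrite inE => /eqP ->; rewrite filter_nseq_m count_nseq_m mval_nseq Hhi eqxx.
    by [].
  move=> /and3P [/eqP Hf /eqP Hc Hm].
  move: (filter_nil_nseq Hf); rewrite Hc => Hu.
  move: Hm; rewrite Hu mval_nseq => ->; by rewrite inE.
case/andP: Hall => Ha Hall.
elim: n hi u => [|n IHn] hi u.
  rewrite ins_cons0; case: u => [|y u]; first by rewrite nil_map_cons.
  rewrite mem_map_cons IHw //=.
  case: (eqVneq y m) => [->|Hym] /=.
    rewrite eq_sym (negbTE Ha) /=. by rewrite !andbF.
  case: (eqVneq y a) => [->|Hya] /=.
    by rewrite eqseq_cons eqxx /= add0n.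
  by rewrite eqseq_cons (negbTE Hya).
rewrite ins_consS; set X := ins m k (a :: w) true n.
have HX : forall u, (u \in X) = [&& [seq x <- u | predC1 m x] == a :: w, count_mem m u == n & mval m k true u] by move=> v; rewrite /X IHn.
clearbody X; case: u => [|y u].
  rewrite mem_cat nil_map_cons orbF; case: hi => //; by rewrite nil_map_cons.
rewrite mem_cat mem_map_cons IHw //=.
case: (eqVneq y m) => [->|Hym] /=.
  rewrite eq_sym (negbTE Ha) /= orbF.
  case: hi => /=; last by rewrite in_nil !andbF.
  rewrite mem_map_cons eqxx /= HX add1n eqSS /Hh leq_subr /=. by [].
have -> : (y :: u \in (if hi then [seq m :: x | x <- X] else [::])) = false.
  case: hi; last by rewrite in_nil. by rewrite mem_map_cons (negbTE Hym).
case: (eqVneq y a) => [->|Hya] /=.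
  by rewrite eqseq_cons eqxx /= add0n.
by rewrite eqseq_cons (negbTE Hya).
Qed.

Lemma size_ins m k w : forall hi n,
  size (ins m k w hi n) = 'C((count (Hh m k) w + hi + n).-1, n).
Proof.
elim: w => [|a w IHw] hi n.
  case: hi => /=; first by rewrite add0n binn.
  case: n => [|n] //=; by rewrite bin_small.
elim: n hi => [|n IHn] hi.
  by rewrite ins_cons0 size_map IHw !bin0.
rewrite ins_consS size_cat size_map IHw /=.
case: hi => /=.
  rewrite size_map IHn /=.
  have -> : (Hh m k a + count (Hh m k) w + 1 + n.+1).-1 = (Hh m k a + count (Hh m k) w + n).+1 by lia.
  rewrite binS addnC; congr (_ + _); f_equal; lia.
by rewrite add0n; f_equal; lia.
Qed.

Lemma uniq_ins m k w : all (predC1 m) w -> forall hi n, uniq (ins m k w hi n).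
Proof.
elim: w => [|a w IHw] Hall hi n.
  by rewrite /=; case: ifP.
case/andP: Hall => Ha Hall.
have inj : forall c : nat, injective (cons c) by move=> c x y [].
elim: n hi => [|n IHn] hi.
  by rewrite ins_cons0 map_inj_uniq // IHw.
rewrite ins_consS cat_uniq map_inj_uniq // IHw // andbT.
destruct hi; last by rewrite /=; apply/hasPn => u _; rewrite in_nil.
rewrite map_inj_uniq // IHn /=.
apply/hasPn => u /mapP [v _ ->]; apply/negP => /mapP [v' _ [E _]].
by move: Ha; rewrite /= E eqxx.
Qed.

Lemma path_split m k u : all (fun y => y <= m) u -> forall x, x <= m ->
  path (vn_step k) x u =
  path (vn_step k) x [seq y <- u | predC1 m y] && mval m k (Hh m k x) u.
Proof.
elim: u => [|y u IH] //= /andP [Hy Hall] x Hx.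
case: (eqVneq y m) => [Eym|Hym] /=.
  subst y. rewrite (IH Hall m (leqnn m)) /Hh leq_subr /vn_step.
  case: (leqP m (x + k)) => Hmx /=.
    have -> : m - k <= x by lia.
    rewrite /=; congr andb.
    have : all (fun y => y <= m) [seq y <- u | predC1 m y].
      by rewrite all_filter; apply: sub_all Hall => z /= ->; rewrite implybT.
    case: [seq y <- u | predC1 m y] => [|c r] //= /andP [Hc _].
    have -> : c <= m + k by lia.
    have -> : c <= x + k by lia.
    by [].
  have -> : (m - k <= x) = false by lia.
  by rewrite andbF /=.
rewrite (IH Hall y Hy) andbA.
by [].
Qed.

Lemma sorted_split m k u : all (fun y => y <= m) u ->
  sorted (vn_step k) u =
  sorted (vn_step k) [seq y <- u | predC1 m y] && mval m k true u.
Proof.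
move=> Hall.
have Hs : forall v, all (fun y => y <= m) v -> sorted (vn_step k) v = path (vn_step k) m v.
  move=> [|y v] //= /andP [Hy _]; by rewrite /vn_step (leq_trans Hy (leq_addr _ _)).
have Hf : all (fun y => y <= m) [seq y <- u | predC1 m y].
  by rewrite all_filter; apply: sub_all Hall => z /= ->; rewrite implybT.
rewrite (Hs _ Hall) (Hs _ Hf) (path_split k Hall (leqnn m)).
by rewrite /Hh leq_subr.
Qed.

Lemma filter_pred1_nseq (m : nat) (u : seq nat) :
  [seq x <- u | predC (predC1 m) x] = nseq (count_mem m u) m.
Proof. elim: u => //= y u ->; case: (eqVneq y m) => [->|] //=. Qed.

Lemma uniq_flatten_ins m k n (W : seq (seq nat)) :
  uniq W -> all (all (predC1 m)) W ->
  uniq (flatten [seq ins m k w true n | w <- W]).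
Proof.
elim: W => [|a W IH] //= /andP [HaW HW] /andP [Ha HallW].
rewrite cat_uniq uniq_ins // IH // andbT /=.
apply/hasPn => u Hu'; apply/negP => Hu.
move/flattenP: Hu' => [us Hus Hu'].
case/mapP: Hus => w Hw Eus; subst us.
move: Hu Hu'; rewrite !mem_ins //; last by move/allP: HallW; apply.
move=> /and3P [/eqP E1 _ _] /and3P [/eqP E2 _ _].
by move: HaW; rewrite -E1 E2 Hw.
Qed.

Lemma key m k s n : all (fun x => x < m) s ->
  count (sorted (vn_step k)) (permutations (s ++ nseq n m)) =
  count (sorted (vn_step k)) (permutations s) * 'C(count (Hh m k) s + n, n).
Proof.
move=> Hs.
have Hs1 : all (predC1 m) s by apply: sub_all Hs => x /= H; rewrite neq_ltn H.
rewrite -!size_filter.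
set W := [seq u <- permutations s | sorted (vn_step k) u].
have HW : forall w, w \in W -> perm_eq w s /\ sorted (vn_step k) w.
  by move=> w; rewrite mem_filter mem_permutations => /andP [].
have HW1 : all (all (predC1 m)) W.
  apply/allP => w /HW [Hp _]; by rewrite (perm_all _ Hp).
have -> : size [seq u <- permutations (s ++ nseq n m) | sorted (vn_step k) u]
  = size (flatten [seq ins m k w true n | w <- W]).
  apply: perm_size; apply: uniq_perm.
  - by rewrite filter_uniq // permutations_uniq.
  - by apply: uniq_flatten_ins => //; rewrite filter_uniq // permutations_uniq.
  move=> u; rewrite mem_filter mem_permutations; apply/idP/idP.
    move=> /andP [Hsu Hp].
    have Hum : all (fun y => y <= m) u.
      apply/allP => x; rewrite (perm_mem Hp) mem_cat => /orP [Hx|].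
        by apply: ltnW; move/allP: Hs; apply.
      by move/nseqP => [-> _].
    move: Hsu; rewrite (sorted_split k Hum) => /andP [Hsw Hmv].
    apply/flattenP; exists (ins m k [seq y <- u | predC1 m y] true n).
      apply: map_f; rewrite mem_filter Hsw mem_permutations /=.
      move: (perm_filter (predC1 m) Hp); rewrite filter_cat filter_nseq /= eqxx /=.
      by rewrite cats0 (all_filterP Hs1).
    rewrite mem_ins; last by rewrite all_filter; apply/allP => x _; apply/implyP.
    rewrite eqxx Hmv andbT /=.
    move/permP: Hp => /(_ (pred1 m)) ->.
    rewrite count_cat count_nseq /= eqxx mul1n.
    rewrite (eq_in_count (a2 := pred0)) ?count_pred0 //.
    by move=> x Hx /=; apply/eqP => E; move/allP: Hs1 => /(_ x Hx); rewrite /= E eqxx.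
  move=> /flattenP [us /mapP [w Hw ->] Hu].
  have [Hp Hsw] := HW w Hw.
  have Hw1 : all (predC1 m) w by move/allP: HW1; apply.
  move: Hu; rewrite mem_ins // => /and3P [/eqP Hf /eqP Hc Hmv].
  have Hum : all (fun y => y <= m) u.
    apply/allP => x Hx; case: (eqVneq x m) => [-> //|Hxm].
    have : x \in [seq y <- u | predC1 m y] by rewrite mem_filter /= Hxm.
    rewrite Hf (perm_mem Hp) => Hxs; by apply: ltnW; move/allP: Hs; apply.
  rewrite (sorted_split k Hum) Hf Hsw Hmv /=.
  rewrite -(perm_filterC (predC1 m) u) filter_pred1_nseq Hf Hc.
  by apply: perm_cat.
rewrite size_flatten /shape -map_comp.
clear HW1; clearbody W; elim: W HW => [|w W IH] HW //=.
rewrite IH; last by move=> x Hx; apply: HW; rewrite inE Hx orbT.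
have [Hp _] := HW w (mem_head _ _).
rewrite size_ins (permP Hp) addn1 /= mulSn.
by rewrite size_filter.
Qed.

Lemma prod_fact_gt0 (ns : seq nat) : 0 < \prod_(n <- ns) n`!.
Proof.
elim: ns => [|x ns IH]; first by rewrite big_nil.
by rewrite big_cons muln_gt0 fact_gt0 IH.
Qed.

Lemma fact_sumD S x : (S + x)`! = 'C(S + x, x) * (x`! * S`!).
Proof. by rewrite -{3}(addnK x S) bin_fact // leq_addl. Qed.

Lemma dvd_multi (ns : seq nat) : \prod_(n <- ns) n`! %| (sumn ns)`!.
Proof.
elim/last_ind: ns => [|ns x IH]; first by rewrite big_nil.
rewrite big_rcons /= sumn_rcons fact_sumD.
apply: dvdn_mull. rewrite [_ * x`!]mulnC. exact: dvdn_mul (dvdnn _) IH.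
Qed.

Lemma mult_rcons ns x : multinomial (rcons ns x) = multinomial ns * 'C(sumn ns + x, x).
Proof.
rewrite {1}/multinomial big_rcons /= sumn_rcons fact_sumD.
have HM : (sumn ns)`! = multinomial ns * \prod_(n <- ns) n`!.
  by rewrite /multinomial divnK // dvd_multi.
rewrite HM.
set M := multinomial ns; set P := \prod_(n <- ns) n`!.
have -> : 'C(sumn ns + x, x) * (x`! * (M * P)) = (M * 'C(sumn ns + x, x)) * (P * x`!).
  by rewrite !mulnA; nia.
by rewrite mulnK // muln_gt0 fact_gt0 prod_fact_gt0.
Qed.

Lemma vmS t b : vn_multiset t.+1 b = vn_multiset t b ++ nseq (b t.+1) t.+1.
Proof.
have E : t.+2 = t.+1 + 1 by rewrite addn1.
rewrite /vn_multiset E iotaD map_cat flatten_cat /=.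
by rewrite add0n cats0.
Qed.

Lemma vm0 b : vn_multiset 0 b = [::] ++ nseq (b 0) 0.
Proof. by rewrite /vn_multiset /= cats0. Qed.

Lemma vm_lt t b : all (fun x => x < t.+1) (vn_multiset t b).
Proof.
elim: t => [|t IH]; first by rewrite vm0 /= all_nseq orbT.
rewrite vmS all_cat all_nseq ltnSn orbT andbT.
by apply: sub_all IH => x /= H; apply: ltnW.
Qed.

Lemma vm_count t b a : a <= t.+1 ->
  count (fun x => a <= x) (vn_multiset t b) = \sum_(a <= j < t.+1) b j.
Proof.
elim: t a => [|t IH] a Ha.
  rewrite vm0 /= count_nseq.
  case: a Ha => [|[|a]] // _; first by rewrite big_nat1 mul1n.
  by rewrite big_geq.
rewrite vmS count_cat count_nseq.
case: (leqP a t.+1) => Hat.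
  by rewrite big_nat_recr // IH // mul1n.
have Ea : a = t.+2 by lia.
subst a. rewrite big_geq // mul0n addn0.
rewrite (eq_in_count (a2 := pred0)) ?count_pred0 //.
move=> x Hx /=; move/allP: (vm_lt t b) => /(_ x Hx) Hx'. lia.
Qed.

Lemma NS t b k : count (is_vn_arrangement k) (permutations (vn_multiset t.+1 b)) =
  count (is_vn_arrangement k) (permutations (vn_multiset t b)) *
  'C(\sum_(t.+1 - k <= j < t.+1) b j + b t.+1, b t.+1).
Proof.
rewrite vmS /is_vn_arrangement key ?vm_lt //.
by rewrite /Hh vm_count // leq_subr.
Qed.

Lemma N0 b k : count (is_vn_arrangement k) (permutations (vn_multiset 0 b)) = 1.
Proof.
rewrite vm0 /is_vn_arrangement (@key 0 k [::]) //.
by rewrite add0n binn.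
Qed.

Lemma sumn_map_iota b n : sumn (map b (iota 0 n)) = \sum_(0 <= j < n) b j.
Proof. by rewrite sumnE big_map /index_iota subn0. Qed.

Lemma base b k t : t <= k ->
  count (is_vn_arrangement k) (permutations (vn_multiset t b)) =
  multinomial (map b (iota 0 t.+1)).
Proof.
elim: t => [|t IH] Htk.
  rewrite N0 /multinomial /= addn0 big_cons big_nil muln1 divnn fact_gt0. by [].
rewrite NS IH ?(ltnW Htk) //.
have -> : t.+1 - k = 0 by lia.
have -> : iota 0 t.+2 = rcons (iota 0 t.+1) t.+1.
  by rewrite -cats1 (_ : t.+2 = t.+1 + 1) ?iotaD // addn1.
by rewrite map_rcons mult_rcons sumn_map_iota.
Qed.

Lemma main b k d :
  count (is_vn_arrangement k) (permutations (vn_multiset (k + d) b)) =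
  multinomial [seq b i | i <- iota 0 k.+1] *
  \prod_(1 <= i < d.+1) 'C(\sum_(i <= j < (i + k).+1) b j, b (i + k)).
Proof.
elim: d => [|d IH].
  by rewrite addn0 base // big_geq // muln1.
rewrite addnS NS IH [in RHS]big_nat_recr // -mulnA.
congr (_ * (_ * _)).
have -> : d.+1 + k = (k + d).+1 by lia.
have -> : (k + d).+1 - k = d.+1 by lia.
rewrite [in RHS]big_nat_recr //=. lia.
Qed.

Theorem proposition4p3 (t : nat) (b : nat -> nat) (k : nat) (hk : k <= t) :
  num_vn_arrangements t b k =
  multinomial [seq b i | i <- iota 0 k.+1] *
  \prod_(1 <= i < (t - k).+1) 'C(\sum_(i <= j < (i + k).+1) b j, b (i + k)).
Proof.
have := main b k (t - k); rewrite subnKC //.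
Qed.
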